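(* Let $\rho\colon\mathrm{Isom}(\mathbf H^1_{\mathbb C})_o\to\mathrm{Isom}(\mathbf H^\infty_{\mathbb C})_o$ be a non-elementary representation with $\mathrm{Arg}(\rho)=\pi/2$. Then $\rho$ preserves a complex hyperbolic subspace of $\mathbf H^\infty_{\mathbb C}$ isometric to $\mathbf H^1_{\mathbb C}$.
   Context: $\mathcal H$: separable complex Hilbert space with strongly non-degenerate Hermitian form $B$ (linear in first variable) of signature $(1,\infty)$; $\mathbf H^\infty_{\mathbb C}=\{[v]:B(v,v)>0\}$, $\cosh d([v],[w])=|B(v,w)|/\sqrt{B(v,v)B(w,w)}$, boundary = isotropic lines, $\mathrm{Isom}(\mathbf H^\infty_{\mathbb C})_o=PU(B)$; complex hyperbolic subspaces are projectivizations of closed complex subspaces of signature $(1,m')$. $\mathbf H^1_{\mathbb C}$: $\mathbb C^2$ with $B(z,w)=z_1\bar w_1-z_2\bar w_2$, $\xi_{1,2}=(e_1\pm e_2)/\sqrt2$; $g(\lambda,b)\in SU(1,1)$ has matrix $\begin{pmatrix}\lambda&ib\\0&\lambda^{-1}\end{pmatrix}$ in basis $(\xi_1,\xi_2)$. Representations are orbitally continuous; non-elementary = no fixed point in $\mathbf H^\infty_{\mathbb C}\cup\partial\mathbf H^\infty_{\mathbb C}$ and no invariant pair of boundary points. For such $\rho$: $\eta_1$ = unique common fixed boundary point of the $\rho(g(\lambda,b))$, $\eta_2$ = other endpoint of the common axis of the hyperbolic $\rho(g(\lambda,0))$, $\lambda\neq1$; isotropic representatives with $B(\eta_1,\eta_2)=1$;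 $E=\eta_1^\perp\cap\eta_2^\perp$. The lift $T_b\in U(B)$ of $\rho(g(1,b))$ with $T_b\eta_1=\eta_1$ satisfies $T_b\eta_2=K(b)\eta_1+\eta_2+c(b)$, $K(b)\in\mathbb C$, $c(b)\in E$. $\mathrm{Arg}(\rho)$ is the argument of $K(1)$ (it lies in $[0,\pi/2]$ and is independent of choices). *)

(* Defs.v *)
From HB Require Import structures.
From mathcomp Require Import all_boot all_order all_algebra.
From mathcomp Require Import complex.
From mathcomp Require Import reals exp trigo.

Set Implicit Arguments.
Unset Strict Implicit.
Unset Printing Implicit Defensive.

Import Order.TTheory GRing.Theory Num.Theory.
Local Open Scope ring_scope.
Local Open Scope complex_scope.

Section Defs.
Variable R : realType.
Local Notation C := R[i].
Definition reC (z : C) : R := let: Complex a _ := z in a.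
Definition imC (z : C) : R := let: Complex _ b := z in b.

(* Matrices are written in the basis (xi_1, xi_2), xi_{1,2}=(e1+-e2)/√2 *)
(* of C^2; in this basis B(z,w)=z1 w1bar - z2 w2bar has Gram matrix J.  *)
Definition Jmat : 'M[C]_2 := \matrix_(i < 2, j < 2) (if i == j then 0 else 1).

Definition SU11 (M : 'M[C]_2) : Prop :=
  \det M = 1 /\ M^T *m Jmat *m map_mx (@conjc R) M = Jmat.

(* g(lambda,b) = [[lambda, i b],[0, lambda^-1]] in the basis (xi_1, xi_2). *)
Definition gmat (l b : R) : 'M[C]_2 :=
  \matrix_(i < 2, j < 2)
    (if (i : nat) == 0%N then (if (j : nat) == 0%N then l%:C else Complex 0 b)
     else (if (j : nat) == 0%N then 0 else (l^-1)%:C)).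

Variable V : lmodType C.
Variable B : V -> V -> C.

Definition hermitian_form : Prop :=
  (forall (a : C) (u v w : V), B (a *: u + v) w = a * B u w + B v w) /\
  (forall u v : V, B v u = conjc (B u v)).

Definition negnorm (w : V) : R := Num.sqrt (reC (- B w w)).

(* Strongly non-degenerate of signature (1, infinity) on a separable
   complex Hilbert space: H = C e0 (+) W with W = e0^perp, B(e0,e0)=1,
   -B positive definite on W, and (W, -B) a separable, complete,
   infinite-dimensional inner product space (i.e. a separable infinite
   dimensional Hilbert space). *)
Definition sig_one_infty_hilbert : Prop :=
  exists e0 : V,
    B e0 e0 = 1 /\
    (let W := fun w => B w e0 = 0 in
     (forall w, W w -> w != 0 -> B w w < 0) /\
     (forall n : nat, exists f : 'I_n -> V,
        (forall k, W (f k)) /\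
        (forall k l, B (f k) (f l) = if k == l then -1 else 0)) /\
     (forall u : nat -> V, (forall n, W (u n)) ->
        (forall e : R, 0 < e -> exists N : nat, forall m n : nat,
            (N <= m)%N -> (N <= n)%N -> negnorm (u m - u n) < e) ->
        exists w, W w /\
          (forall e : R, 0 < e -> exists N : nat, forall n : nat,
             (N <= n)%N -> negnorm (u n - w) < e)) /\
     (exists s : nat -> V, (forall n, W (s n)) /\
        forall w, W w -> forall e : R, 0 < e ->
          exists n, negnorm (w - s n) < e)).

Definition unitaryB (T : V -> V) : Prop :=
  (forall (a : C) (u v : V), T (a *: u + v) = a *: T u + T v) /\
  bijective T /\
  (forall u v : V, B (T u) (T v) = B u v).

Definition same_line (u v : V) : Prop := exists mu : C, u = mu *: v.

Definition isotropic (v : V) : Prop := v != 0 /\ B v v = 0.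

(* points of H^infty_C are lines [v] with B(v,v) > 0 *)
Definition positive (v : V) : Prop := 0 < B v v.

Definition acosh (x : R) : R := ln (x + Num.sqrt (x ^+ 2 - 1)).

Definition hdist (v w : V) : R :=
  acosh (reC `|B v w| / Num.sqrt (reC (B v v) * reC (B w w))).

(* rho is given on SU(1,1) through a choice of lifts rho g in U(B);     *)
(* it is a homomorphism into PU(B) = U(B)/U(1) and kills -1.            *)
Definition proj_rep (rho : 'M[C]_2 -> V -> V) : Prop :=
  (forall g, SU11 g -> unitaryB (rho g)) /\
  (forall g h, SU11 g -> SU11 h ->
     exists mu : C, `|mu| = 1 /\ forall v, rho (g *m h) v = mu *: rho g (rho h v)) /\
  (exists mu : C, `|mu| = 1 /\ forall v, rho (- 1%:M) v = mu *: v).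

Definition orbitally_continuous (rho : 'M[C]_2 -> V -> V) : Prop :=
  forall x : V, positive x ->
  forall g0, SU11 g0 ->
  forall e : R, 0 < e -> exists d : R, 0 < d /\
    forall g, SU11 g -> (forall i j, `|g i j - g0 i j| < d%:C) ->
      hdist (rho g x) (rho g0 x) < e.

(* non-elementary: no fixed point in H^infty_C u boundary, and no invariant
   pair of boundary points *)
Definition non_elementary (rho : 'M[C]_2 -> V -> V) : Prop :=
  ~ (exists v : V, v != 0 /\ 0 <= B v v /\
        forall g, SU11 g -> same_line (rho g v) v) /\
  ~ (exists p q : V, isotropic p /\ isotropic q /\ ~ same_line p q /\
        forall g, SU11 g ->
          (same_line (rho g p) p /\ same_line (rho g q) q) \/
          (same_line (rho g p) q /\ same_line (rho g q) p)).

Definition has_arg (K : C) (theta : R) : Prop :=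
  K != 0 /\ reC K = reC `|K| * cos theta /\ imC K = reC `|K| * sin theta.

(* Arg(rho) = theta : with eta1 the unique common fixed boundary point of the
   rho(g(l,b)), eta2 the other endpoint of the common axis of the
   rho(g(l,0)) (l <> 1), normalised by B(eta1,eta2) = 1, and T = mu rho(g(1,1))
   the lift fixing eta1, write T eta2 = K eta1 + eta2 + c with c in
   E = eta1^perp cap eta2^perp; then K has argument theta. *)
Definition Arg_is (rho : 'M[C]_2 -> V -> V) (theta : R) : Prop :=
  exists (eta1 eta2 : V) (mu K : C) (c : V),
    isotropic eta1 /\ isotropic eta2 /\ B eta1 eta2 = 1 /\
    (forall l b : R, 0 < l -> same_line (rho (gmat l b) eta1) eta1) /\
    (forall eta : V, isotropic eta ->
       (forall l b : R, 0 < l -> same_line (rho (gmat l b) eta) eta) ->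
       same_line eta eta1) /\
    (forall l : R, 0 < l -> same_line (rho (gmat l 0) eta2) eta2) /\
    `|mu| = 1 /\ mu *: rho (gmat 1 1) eta1 = eta1 /\
    mu *: rho (gmat 1 1) eta2 = K *: eta1 + eta2 + c /\
    B c eta1 = 0 /\ B c eta2 = 0 /\
    has_arg K theta.

(* a complex hyperbolic subspace isometric to H^1_C: the projectivization of
   the (closed, 2-dimensional) span of v1, v2 where B has signature (1,1)
   on span{v1,v2}, v1,v2 being a B-orthonormal basis *)
Definition in_span2 (v1 v2 w : V) : Prop :=
  exists a b : C, w = a *: v1 + b *: v2.

Definition preserves_H1_subspace (rho : 'M[C]_2 -> V -> V) : Prop :=
  exists v1 v2 : V,
    B v1 v1 = 1 /\ B v2 v2 = -1 /\ B v1 v2 = 0 /\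
    forall g, SU11 g -> forall w, in_span2 v1 v2 w -> in_span2 v1 v2 (rho g w).

End Defs.

(* Main.v *)
Require Import Defs.
From HB Require Import structures.
From mathcomp Require Import all_boot all_order all_algebra.
From mathcomp Require Import complex.
From mathcomp Require Import reals exp trigo.
From mathcomp Require Import ring lra.
Set Implicit Arguments.
Unset Strict Implicit.
Import Order.TTheory GRing.Theory Num.Theory.
Local Open Scope ring_scope.
Local Open Scope complex_scope.

Section Basic.
Variable R : realType.
Local Notation C := R[i].
Variable V : lmodType C.
Variable B : V -> V -> C.
Hypothesis hB : hermitian_form B.

Lemma B0l w : B 0 w = 0.
Proof.
have := hB.1 1 0 0 w; rewrite scale1r addr0 mul1r => h.
by apply: (addrI (B 0 w)); rewrite addr0 -h.
Qed.
Lemma BDl u v w : B (u + v) w = B u w + B v w.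
Proof. by have := hB.1 1 u v w; rewrite scale1r mul1r. Qed.
Lemma BZl a u w : B (a *: u) w = a * B u w.
Proof. by have := hB.1 a u 0 w; rewrite addr0 B0l addr0. Qed.
Lemma Bsym u v : B v u = (B u v)^*.
Proof. exact: hB.2. Qed.
Lemma BDr u v w : B w (u + v) = B w u + B w v.
Proof. by rewrite [LHS]Bsym BDl rmorphD [B w u]Bsym [B w v]Bsym. Qed.
Lemma BZr a u w : B w (a *: u) = a^* * B w u.
Proof. by rewrite [LHS]Bsym BZl rmorphM [B w u]Bsym. Qed.
Lemma B0r w : B w 0 = 0.
Proof. by rewrite Bsym B0l rmorph0. Qed.
Lemma BNl u w : B (- u) w = - B u w.
Proof. by rewrite -scaleN1r BZl mulN1r. Qed.
Lemma BNr u w : B w (- u) = - B w u.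
Proof. by rewrite -scaleN1r BZr rmorphN rmorph1 mulN1r. Qed.
Lemma BBl u v w : B (u - v) w = B u w - B v w.
Proof. by rewrite BDl BNl. Qed.
Lemma BBr u v w : B w (u - v) = B w u - B w v.
Proof. by rewrite BDr BNr. Qed.

Definition Bsimp := (BDl, BDr, BZl, BZr, BNl, BNr, B0l, B0r).

Lemma null_perp (e0 e1 e2 e : V) :
  B e0 e0 = 1 -> (forall w, B w e0 = 0 -> w != 0 -> B w w < 0) ->
  B e1 e1 = 0 -> B e2 e2 = 0 -> B e1 e2 = 1 ->
  B e e1 = 0 -> B e e2 = 0 -> B e e = 0 -> e = 0.
Proof.
move=> h00 hneg h11 h22 h12 he1 he2 hee.
have h21 : B e2 e1 = 1 by rewrite Bsym h12 rmorph1.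
apply/eqP; apply/negPn/negP => enz.
have [s0|snz] := eqVneq (B e e0) 0.
  by have := hneg e s0 enz; rewrite hee ltxx.
have [p hp] : exists p, p = e1 + e2 by eexists.
have hpp : B p p = 2 by rewrite hp !Bsimp h11 h22 h12 h21; ring.
have hep : B e p = 0 by rewrite hp !Bsimp he1 he2 addr0.
have hpe : B p e = 0 by rewrite Bsym hep rmorph0.
have [u hu] : exists u, u = B e e0 *: p - B p e0 *: e by eexists.
have hu0 : B u e0 = 0 by rewrite hu !Bsimp; ring.
have unz : u != 0.
  apply/negP => /eqP u0.
  have : B u p = 0 by rewrite u0 B0l.
  rewrite hu !Bsimp hpp hep => /eqP; rewrite mulr0 subr0 mulf_eq0 (negbTE snz) /=.
  by rewrite pnatr_eq0.
have := hneg u hu0 unz.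
have -> : B u u = (B e e0 * (B e e0)^*) * 2.
  rewrite hu !Bsimp hpp hep hpe hee; ring.
have h0 : 0 <= B e e0 * (B e e0)^* * 2 by rewrite mulr_ge0 // mulcJ_ge0.
by move=> hlt; have := lt_le_trans hlt h0; rewrite ltxx.
Qed.
End Basic.

Section Mx.
Variable R : realType.
Local Notation C := R[i].

Definition mx2 (a b c d : C) : 'M[C]_2 :=
  \matrix_(i < 2, j < 2)
    (if (i : nat) == 0%N then (if (j : nat) == 0%N then a else b)
     else (if (j : nat) == 0%N then c else d)).

Lemma mx2_mul a b c d a' b' c' d' :
  mx2 a b c d *m mx2 a' b' c' d' =
  mx2 (a * a' + b * c') (a * b' + b * d') (c * a' + d * c') (c * b' + d * d').
Proof.
apply/matrixP => i j; rewrite !mxE !big_ord_recl big_ord0 !mxE addr0.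
by case: i => [[|[|//]]] ?; case: j => [[|[|//]]] ?.
Qed.

Lemma mx2_eq a b c d a' b' c' d' :
  a = a' -> b = b' -> c = c' -> d = d' -> mx2 a b c d = mx2 a' b' c' d'.
Proof. by move=> -> -> -> ->. Qed.

Lemma gmatE (l b : R) : gmat l b = mx2 (Complex l 0) (Complex 0 b) (Complex 0 0) (Complex l^-1 0).
Proof. by []. Qed.

Definition wmat : 'M[C]_2 := mx2 (Complex 0 0) (Complex 0 1) (Complex 0 1) (Complex 0 0).


Lemma det_mx2 a b c d : \det (mx2 a b c d) = a * d - b * c.
Proof.
rewrite (expand_det_row _ ord0) !big_ord_recl big_ord0 /cofactor !det_mx11 !mxE /=.
by rewrite /bump /=; ring.
Qed.

Lemma tr_mx2 a b c d : (mx2 a b c d)^T = mx2 a c b d.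
Proof. by apply/matrixP => i j; rewrite !mxE; case: i => [[|[|//]]] ?; case: j => [[|[|//]]] ?. Qed.

Lemma conj_mx2 a b c d : map_mx conjc (mx2 a b c d) = mx2 a^* b^* c^* d^*.
Proof. by apply/matrixP => i j; rewrite !mxE; case: i => [[|[|//]]] ?; case: j => [[|[|//]]] ?. Qed.

Lemma JmatE : Jmat R = mx2 0 1 1 0.
Proof. by apply/matrixP => i j; rewrite !mxE; case: i => [[|[|//]]] ?; case: j => [[|[|//]]] ?. Qed.

Lemma mx2E (g : 'M[C]_2) : g = mx2 (g 0 0) (g 0 1) (g 1 0) (g 1 1).
Proof. by apply/matrixP => -[[|[|//]] hi] -[[|[|//]] hj]; rewrite !mxE /=; congr (g _ _); apply/val_inj. Qed.

Lemma scal_mx2 (a : C) : a%:M = mx2 a 0 0 a.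
Proof. by apply/matrixP => i j; rewrite !mxE; case: i => [[|[|//]]] ?; case: j => [[|[|//]]] ?. Qed.

Lemma SU11_mx2 a b c d : a * d - b * c = 1 ->
  c * a^* + a * c^* = 0 -> c * b^* + a * d^* = 1 ->
  d * a^* + b * c^* = 1 -> d * b^* + b * d^* = 0 -> SU11 (mx2 a b c d).
Proof.
move=> h1 h2 h3 h4 h5; split; first by rewrite det_mx2.
rewrite tr_mx2 JmatE conj_mx2 !mx2_mul; apply: mx2_eq.
- by rewrite -[RHS]h2; ring.
- by rewrite -[RHS]h3; ring.
- by rewrite -[RHS]h4; ring.
- by rewrite -[RHS]h5; ring.
Qed.

Lemma SU11_mx2_inv a b c d : SU11 (mx2 a b c d) -> a * d - b * c = 1 /\
  c * a^* + a * c^* = 0 /\ c * b^* + a * d^* = 1 /\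
  d * a^* + b * c^* = 1 /\ d * b^* + b * d^* = 0.
Proof.
case=> hd; rewrite det_mx2 in hd; rewrite tr_mx2 JmatE conj_mx2 !mx2_mul => h.
have h2 := congr1 (fun M : 'M[C]_2 => M 0 0) h.
have h3 := congr1 (fun M : 'M[C]_2 => M 0 1) h.
have h4 := congr1 (fun M : 'M[C]_2 => M 1 0) h.
have h5 := congr1 (fun M : 'M[C]_2 => M 1 1) h.
move: h2 h3 h4 h5; rewrite !mxE /= => h2 h3 h4 h5.
split => //; split; [rewrite -[RHS]h2|split; [rewrite -[RHS]h3|split;[rewrite -[RHS]h4|rewrite -[RHS]h5]]]; ring.
Qed.

Lemma SU11_mul (g h : 'M[C]_2) : SU11 g -> SU11 h -> SU11 (g *m h).
Proof.
move=> [dg hg] [dh hh]; split; first by rewrite det_mulmx dg dh mulr1.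
by rewrite trmx_mul map_mxM !mulmxA -(mulmxA h^T g^T) -(mulmxA h^T) hg.
Qed.

Ltac cplx := apply/eqP; rewrite eq_complex /=; apply/andP; split; apply/eqP.

Lemma SU11_gmat (l b : R) : l != 0 -> SU11 (gmat l b).
Proof.
move=> hl; rewrite gmatE; apply: SU11_mx2; simpc; cplx; try field => //.
Qed.

Lemma SU11_form (g : 'M[C]_2) : SU11 g -> exists p q r s : R, p * s + q * r = 1 /\
  g = mx2 (Complex p 0) (Complex 0 q) (Complex 0 r) (Complex s 0).
Proof.
move=> hg; rewrite (mx2E g) in hg *.
move: (g 0 0) (g 0 1) (g 1 0) (g 1 1) hg => a b c d /SU11_mx2_inv [h1 [h2 [h3 [h4 h5]]]].
have ha : a - a^* = 0.
  have -> : a - a^* = a^* * (a*d - b*c - 1) - a * (d*a^* + b*c^* - 1) + b * (c*a^* + a*c^*) by ring.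
  by rewrite h1 h4 h2 !subrr !mulr0 subr0 addr0.
have hb : b + b^* = 0.
  have -> : b + b^* = - (b^* * (a*d - b*c - 1) - a * (d*b^* + b*d^*) + b * (c*b^* + a*d^* - 1)) by ring.
  by rewrite h1 h5 h3 !subrr !mulr0 subr0 addr0 oppr0.
have hc : c + c^* = 0.
  have -> : c + c^* = - (c^* * (a*d - b*c - 1) - d * (c*a^* + a*c^*) + c * (d*a^* + b*c^* - 1)) by ring.
  by rewrite h1 h2 h4 !subrr !mulr0 subr0 addr0 oppr0.
have hd : d - d^* = 0.
  have -> : d - d^* = d^* * (a*d - b*c - 1) - d * (c*b^* + a*d^* - 1) + c * (d*b^* + b*d^*) by ring.
  by rewrite h1 h3 h5 !subrr !mulr0 subr0 addr0.
move: a b c d h1 ha hb hc hd {h2 h3 h4 h5} => [a1 a2] [b1 b2] [c1 c2] [d1 d2] h1 ha hb hc hd.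
move: ha hb hc hd h1; simpc => /eqP; rewrite eq_complex /= => /andP [_ /eqP ha].
move=> /eqP; rewrite eq_complex /= => /andP [/eqP hb _].
move=> /eqP; rewrite eq_complex /= => /andP [/eqP hc _].
move=> /eqP; rewrite eq_complex /= => /andP [_ /eqP hd].
have a0 : a2 = 0 by lra.
have b0 : b1 = 0 by lra.
have c0 : c1 = 0 by lra.
have d0 : d2 = 0 by lra.
subst a2 b1 c1 d2; simpc => /eqP; rewrite eq_complex /= => /andP [/eqP h1 _].
exists a1, b2, c2, d1; split => //; lra.
Qed.

Lemma SU11_w : SU11 wmat.
Proof. rewrite /wmat; apply: SU11_mx2; simpc; cplx; ring. Qed.

Lemma SU11_N1 : SU11 (- 1%:M : 'M[C]_2).
Proof. rewrite -scaleN1r scalemx1 scal_mx2; apply: SU11_mx2; simpc; cplx; ring. Qed.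

Ltac mxid := rewrite ?gmatE /wmat ?mx2_mul; apply: mx2_eq; simpc; cplx.

Lemma I1 (s : R) : s ^+ 2 = 2 -> s != 0 ->
  gmat s 0 *m gmat 1 1 = gmat 1 1 *m (gmat 1 1 *m gmat s 0).
Proof.
move=> h2 hs; mxid; rewrite ?invr1; try field => //.
apply/eqP; rewrite -subr_eq0; apply/eqP.
have -> : s - (s^-1 + 1 / s) = (s ^+ 2 - 2) / s by field.
by rewrite h2 subrr mul0r.
Qed.

Lemma I2 (l : R) : l != 0 -> gmat l 0 *m wmat = wmat *m gmat l^-1 0.
Proof. by move=> hl; mxid; rewrite ?invrK. Qed.

Lemma I3 : gmat 1 (-1) = wmat *m (gmat 1 1 *m (wmat *m (gmat 1 1 *m wmat))) :> 'M[C]_2.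
Proof. mxid; rewrite ?invr1; ring. Qed.

Lemma I4 (s c : R) : s != 0 ->
  gmat 1 (s ^+ 2 * c) = gmat s 0 *m (gmat 1 c *m gmat s^-1 0).
Proof. move=> hs; mxid; rewrite ?invr1 ?invrK; field; done. Qed.

Lemma I5 (l b : R) : l != 0 -> gmat l b = gmat l 0 *m gmat 1 (b / l).
Proof. move=> hl; mxid; rewrite ?invr1; field; done. Qed.

Lemma I6 (l b : R) : gmat l b = (- 1%:M) *m gmat (- l) (- b).
Proof. rewrite -scaleN1r scalemx1 scal_mx2; mxid; rewrite ?invrN; ring. Qed.

Lemma I7 (p q r s : R) : r != 0 -> p * s + q * r = 1 ->
  mx2 (Complex p 0) (Complex 0 q) (Complex 0 r) (Complex s 0) =
  gmat 1 (- p / r) *m (wmat *m gmat r (- s)).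
Proof.
move=> hr h; have hq : q = (1 - p * s) / r.
  by rewrite -h; field; done.
subst q; mxid; rewrite ?invr1; field; done.
Qed.

Lemma I8 (p q s : R) : p * s = 1 ->
  mx2 (Complex p 0) (Complex 0 q) (Complex 0 0) (Complex s 0) = gmat p q.
Proof.
move=> h; have hp : p != 0 by apply/eqP => p0; move: h; rewrite p0 mul0r => /eqP; rewrite eq_sym oner_eq0.
have -> : s = p^-1 by apply: (mulfI hp); rewrite h mulfV.
by [].
Qed.

End Mx.


Section Main.
Variable R : realType.
Local Notation C := R[i].
Variable V : lmodType C.
Variable B : V -> V -> C.
Variable rho : 'M[C]_2 -> V -> V.
Hypothesis hB : hermitian_form B.
Hypothesis hrep : proj_rep B rho.
Variables e1 e2 : V.
Hypotheses (h11 : B e1 e1 = 0) (h22 : B e2 e2 = 0) (h12 : B e1 e2 = 1).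

Lemma h21 : B e2 e1 = 1.
Proof. by rewrite (Bsym hB) h12 rmorph1. Qed.

Definition inP v := exists a b, v = a *: e1 + b *: e2.

Lemma inP0 : inP 0.
Proof. by exists 0, 0; rewrite !scale0r addr0. Qed.
Lemma inP1 : inP e1.
Proof. by exists 1, 0; rewrite scale1r scale0r addr0. Qed.
Lemma inP2 : inP e2.
Proof. by exists 0, 1; rewrite scale1r scale0r add0r. Qed.
Lemma inPD u v : inP u -> inP v -> inP (u + v).
Proof.
move=> [a [b ->]] [a' [b' ->]]; exists (a + a'), (b + b').
by rewrite !scalerDl addrACA.
Qed.
Lemma inPZ x u : inP u -> inP (x *: u).
Proof.
move=> [a [b ->]]; exists (x * a), (x * b).
by rewrite scalerDr !scalerA.
Qed.

Definition pres (U : V -> V) := forall v, inP v -> inP (U v).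

Section Rho.
Variable g : 'M[C]_2.
Hypothesis hg : SU11 g.
Lemma rhoL a u v : rho g (a *: u + v) = a *: rho g u + rho g v.
Proof. exact: (hrep.1 g hg).1. Qed.
Lemma rho0 : rho g 0 = 0.
Proof.
have := rhoL 1 0 0; rewrite !scale1r addr0 => h.
by apply: (addrI (rho g 0)); rewrite addr0 -h.
Qed.
Lemma rhoD u v : rho g (u + v) = rho g u + rho g v.
Proof. by have := rhoL 1 u v; rewrite !scale1r. Qed.
Lemma rhoZ a u : rho g (a *: u) = a *: rho g u.
Proof. by have := rhoL a u 0; rewrite !addr0 rho0 addr0. Qed.
Lemma rhoB u v : B (rho g u) (rho g v) = B u v.
Proof. exact: (hrep.1 g hg).2.2. Qed.
Lemma pres_lin : inP (rho g e1) -> inP (rho g e2) -> pres (rho g).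
Proof.
move=> p1 p2 v [a [b ->]]; rewrite rhoD !rhoZ.
by apply: inPD; apply: inPZ.
Qed.
Lemma pres_line : same_line (rho g e1) e1 -> same_line (rho g e2) e2 -> pres (rho g).
Proof.
move=> [x hx] [y hy]; apply: pres_lin; [rewrite hx | rewrite hy]; apply: inPZ;
  [exact: inP1 | exact: inP2].
Qed.
End Rho.

Lemma pres_mul g h : SU11 g -> SU11 h -> pres (rho g) -> pres (rho h) -> pres (rho (g *m h)).
Proof.
move=> sg sh pg ph v pv; have [mu [_ hm]] := hrep.2.1 g h sg sh.
by rewrite hm; apply: inPZ; apply: pg; apply: ph.
Qed.

Lemma coef1 a b : B (a *: e1 + b *: e2) e1 = b.
Proof. by rewrite !(Bsimp hB) h11 h21; ring. Qed.
Lemma coef2 a b : B (a *: e1 + b *: e2) e2 = a.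
Proof. by rewrite !(Bsimp hB) h12 h22; ring. Qed.

Variables (e0 : V).
Hypotheses (h00 : B e0 e0 = 1) (hneg : forall w, B w e0 = 0 -> w != 0 -> B w w < 0).

Lemma eigen (U : V -> V) (al be ga : C) v :
  (forall u w, B (U u) (U w) = B u w) -> U e1 = al *: e1 -> U e2 = be *: e2 ->
  al * al^* != 1 -> B v v = 0 -> U v = ga *: v -> inP v.
Proof.
move=> hU hU1 hU2 hal hvv hUv.
have hab : al * be^* = 1 by rewrite -h12 -(hU e1 e2) hU1 hU2 !(Bsimp hB) h12 mulr1.
set x := B v e2; set y := B v e1.
have hx : ga * be^* * x = x.
  by rewrite /x -{2}(hU v e2) hUv hU2 !(Bsimp hB); ring.
have hy : ga * al^* * y = y.
  by rewrite /y -{2}(hU v e1) hUv hU1 !(Bsimp hB); ring.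
have hxy : x = 0 \/ y = 0.
  have [x0|xnz] := eqVneq x 0; first by left.
  have [y0|ynz] := eqVneq y 0; first by right.
  exfalso.
  have h1 : ga * be^* = 1 by apply: (mulIf xnz); rewrite mul1r.
  have h2 : ga * al^* = 1 by apply: (mulIf ynz); rewrite mul1r.
  have : al^* = be^*.
    by rewrite -[LHS]mul1r -h1 mulrAC h2 mul1r.
  move=> e; move/negP: hal; apply; apply/eqP; rewrite -hab; congr (_ * _); exact: e.
have hvx : B e2 v = x^* by rewrite (Bsym hB).
have hvy : B e1 v = y^* by rewrite (Bsym hB).
have he : v - x *: e1 - y *: e2 = 0.
  apply: (null_perp hB h00 hneg h11 h22 h12).
  - by rewrite !(Bsimp hB) -/y h11 h21; ring.
  - by rewrite !(Bsimp hB) -/x h12 h22; ring.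
  - rewrite !(Bsimp hB) -/x -/y hvx hvy h11 h12 h21 h22 hvv.
    by case: hxy => ->; rewrite ?rmorph0; ring.
exists x, y; apply/eqP; rewrite -subr_eq0 opprD addrA; exact/eqP.
Qed.

End Main.

Section Final.
Variable R : realType.
Local Notation C := R[i].
Variable V : lmodType C.
Variable B : V -> V -> C.
Variable rho : 'M[C]_2 -> V -> V.
Hypothesis hB : hermitian_form B.
Hypothesis hrep : proj_rep B rho.
Variables e1 e2 e0 : V.
Hypotheses (h11 : B e1 e1 = 0) (h22 : B e2 e2 = 0) (h12 : B e1 e2 = 1).
Hypotheses (h00 : B e0 e0 = 1) (hneg : forall w, B w e0 = 0 -> w != 0 -> B w w < 0).
Variables mu K : C.
Hypotheses (hmu : mu * mu^* = 1) (hK : K != 0).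
Hypotheses (hT1 : mu *: rho (gmat 1 1) e1 = e1) (hT2 : mu *: rho (gmat 1 1) e2 = K *: e1 + e2).
Hypothesis hfix1 : forall l b : R, 0 < l -> same_line (rho (gmat l b) e1) e1.
Hypothesis hfix2 : forall l : R, 0 < l -> same_line (rho (gmat l 0) e2) e2.

Local Notation P := (inP e1 e2).
Local Notation pr := (pres e1 e2).
Local Notation n1 := (gmat 1 1 : 'M[C]_2).

Lemma unit_nz (x : C) : x * x^* = 1 -> x != 0.
Proof. by move=> h; apply/eqP => x0; move: h; rewrite x0 mul0r => /eqP; rewrite eq_sym oner_eq0. Qed.

Lemma mu_nz : mu != 0. Proof. exact: unit_nz. Qed.

Lemma Sn : SU11 n1. Proof. by apply: SU11_gmat; rewrite oner_eq0. Qed.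

Lemma n1e1 : rho n1 e1 = mu^-1 *: e1.
Proof. by rewrite -{2}hT1 scalerA mulVf ?mu_nz // scale1r. Qed.
Lemma n1e2 : rho n1 e2 = mu^-1 *: (K *: e1 + e2).
Proof. by rewrite -hT2 scalerA mulVf ?mu_nz // scale1r. Qed.

Lemma pres_n1 : pr (rho n1).
Proof.
apply: (pres_lin hrep Sn); rewrite ?n1e1 ?n1e2; apply: inPZ;
  [exact: inP1 | apply: inPD; [apply: inPZ; exact: inP1 | exact: inP2]].
Qed.

Lemma pres_a (l : R) : 0 < l -> pr (rho (gmat l 0)).
Proof.
move=> hl; apply: (pres_line hrep); first by apply: SU11_gmat; rewrite gt_eqF.
  exact: hfix1.
exact: hfix2.
Qed.

Lemma alpha : exists (s : R) (al be : C), 0 < s /\ rho (gmat s 0) e1 = al *: e1 /\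
  rho (gmat s 0) e2 = be *: e2 /\ al * al^* != 1.
Proof.
set s := Num.sqrt (2:R).
have s2 : s ^+ 2 = 2 by rewrite sqr_sqrtr // ler0n.
have sp : 0 < s by rewrite sqrtr_gt0 ltr0n.
have snz : s != 0 by rewrite gt_eqF.
have Sa : SU11 (gmat s 0 : 'M[C]_2) by apply: SU11_gmat.
have [al hal] := hfix1 0 sp.
have [be hbe] := hfix2 sp.
exists s, al, be; do 3 split => //.
have hab : al * be^* = 1.
  by rewrite -h12 -(rhoB hrep Sa e1 e2) hal hbe !(Bsimp hB) h12 mulr1.
have bnz : be != 0.
  by apply/eqP => b0; move: hab; rewrite b0 rmorph0 mulr0 => /eqP; rewrite eq_sym oner_eq0.
have [nu1 [hn1 E1]] := hrep.2.1 _ _ Sa Sn.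
have [nu2 [hn2 E2]] := hrep.2.1 _ _ Sn (SU11_mul Sn Sa).
have [nu3 [hn3 E3]] := hrep.2.1 _ _ Sn Sa.
have key : nu1 *: rho (gmat s 0) (rho n1 e2) =
    nu2 *: rho n1 (nu3 *: rho n1 (rho (gmat s 0) e2)).
  by rewrite -E1 -E3 -E2 (I1 s2 snz).
rewrite ?(rhoZ hrep Sa, rhoD hrep Sa, rhoZ hrep Sn, rhoD hrep Sn, hal, hbe, n1e1, n1e2) in key.
have F1 := congr1 (fun v => B v e1) key.
have F2 := congr1 (fun v => B v e2) key.
rewrite /= !(Bsimp hB) h11 h12 (h21 hB h12) h22 in F1 F2.
move/eqP: F1; rewrite -subr_eq0 => /eqP F1.
move/eqP: F2; rewrite -subr_eq0 => /eqP F2.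
have G1 : nu1 * mu^-1 = nu2 * nu3 * mu^-1 * mu^-1.
  have : (nu1 * mu^-1 - nu2 * nu3 * mu^-1 * mu^-1) * be = 0.
    by rewrite -[RHS]F1; ring.
  by move/eqP; rewrite mulf_eq0 (negbTE bnz) orbF subr_eq0 => /eqP.
have nznu := fun (x : C) (h : `|x| = 1) => unit_nz (eq_trans (esym (sqr_normc x)) (eq_trans (congr1 (fun y => y ^+ 2) h) (expr1n _ 2))).
have X0 : nu2 * nu3 * mu^-1 * mu^-1 * K != 0.
  have n2 := nznu _ hn2; have n3 := nznu _ hn3.
  have mi : mu^-1 != 0 by rewrite invr_neq0 // mu_nz.
  by rewrite !mulf_eq0 (negbTE n2) (negbTE n3) (negbTE mi) (negbTE hK).
have G2 : al = 2 * be.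
  have : (nu2 * nu3 * mu^-1 * mu^-1 * K) * (al - 2 * be) = 0.
    have F2' : nu1 * mu^-1 * (K * al) - nu2 * nu3 * mu^-1 * mu^-1 * (2 * K * be) = 0.
      by rewrite -[RHS]F2; ring.
    by rewrite G1 in F2'; rewrite -[RHS]F2'; ring.
  by move/eqP; rewrite mulf_eq0 (negbTE X0) /= subr_eq0 => /eqP.
rewrite G2 rmorphM rmorph_nat.
have -> : 2 * be * (2 * be^*) = 2 * (2 * be * be^*) by ring.
by rewrite -G2 hab mulr1 pnatr_eq1.
Qed.

Local Notation w := (wmat R).

Lemma pres_w : pr (rho w).
Proof.
have [s [al [be [sp [hal [hbe hnot]]]]]] := alpha.
have snz : s != 0 by rewrite gt_eqF.
have Sa : SU11 (gmat s 0 : 'M[C]_2) by apply: SU11_gmat.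
have Sa' : SU11 (gmat s^-1 0 : 'M[C]_2) by apply: SU11_gmat; rewrite invr_neq0.
have Sw := SU11_w R.
have [nu4 [hn4 E4]] := hrep.2.1 _ _ Sa Sw.
have [nu5 [hn5 E5]] := hrep.2.1 _ _ Sw Sa'.
have nz4 : nu4 != 0.
  by apply: unit_nz; rewrite -sqr_normc hn4 expr1n.
have key : forall e, B e e = 0 -> same_line (rho (gmat s^-1 0) e) e -> P (rho w e).
  move=> e hee [al' hal'].
  apply: (eigen hB h11 h22 h12 h00 hneg (U := rho (gmat s 0)) (al := al) (be := be)
     (ga := nu4^-1 * nu5 * al')).
  - exact: (rhoB hrep Sa).
  - exact: hal.
  - exact: hbe.
  - exact: hnot.
  - by rewrite (rhoB hrep Sw).
  - have := E4 e; rewrite (I2 snz) E5 hal' (rhoZ hrep Sw) => h.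
    by rewrite -[LHS]scale1r -(mulVf nz4) -scalerA -h !scalerA.
apply: (pres_lin hrep Sw); apply: key => //.
- by apply: hfix1; rewrite invr_gt0.
- by apply: hfix2; rewrite invr_gt0.
Qed.

Lemma Sg (l b : R) : l != 0 -> SU11 (gmat l b : 'M[C]_2).
Proof. exact: SU11_gmat. Qed.

Ltac su := repeat first [ apply: SU11_mul | exact: Sn | exact: (SU11_w R) ].

Lemma pres_nm1 : pr (rho (gmat 1 (-1))).
Proof.
have Sw := SU11_w R.
rewrite I3.
apply: (pres_mul hrep Sw); first by su.
  exact: pres_w.
apply: (pres_mul hrep Sn); first by su.
  exact: pres_n1.
apply: (pres_mul hrep Sw); first by su.
  exact: pres_w.
apply: (pres_mul hrep Sn) => //; [exact: pres_n1 | exact: pres_w].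
Qed.

Lemma pres_conj (s c : R) : 0 < s -> pr (rho (gmat 1 c)) -> pr (rho (gmat 1 (s ^+ 2 * c))).
Proof.
move=> sp hc; have snz : s != 0 by rewrite gt_eqF.
have sinz : s^-1 != 0 by rewrite invr_neq0.
rewrite (I4 c snz).
apply: (pres_mul hrep (Sg 0 snz)); first by apply: SU11_mul; apply: Sg; rewrite ?oner_eq0.
  exact: pres_a.
apply: (pres_mul hrep (Sg c (oner_neq0 _)) (Sg 0 sinz)) => //.
by apply: pres_a; rewrite invr_gt0.
Qed.

Lemma pres_n (b : R) : pr (rho (gmat 1 b)).
Proof.
have [bp|bn|->] := ltgtP b 0.
- set s := Num.sqrt (- b).
  have sp : 0 < s by rewrite sqrtr_gt0 oppr_gt0.
  have -> : b = s ^+ 2 * (-1) by rewrite sqr_sqrtr ?oppr_ge0 ?ltW // mulrN1 opprK.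
  exact: (pres_conj sp pres_nm1).
- set s := Num.sqrt b.
  have sp : 0 < s by rewrite sqrtr_gt0.
  have -> : b = s ^+ 2 * 1 by rewrite sqr_sqrtr ?ltW // mulr1.
  exact: (pres_conj sp pres_n1).
- exact: pres_a.
Qed.

Lemma pres_gl (l b : R) : l != 0 -> pr (rho (gmat l b)).
Proof.
move=> lnz.
have [lp|ln|l0] := ltgtP l 0; last by move: lnz; rewrite l0 eqxx.
- rewrite (I6 l b).
  have [nu [_ hnu]] := hrep.2.2.
  apply: (pres_mul hrep (SU11_N1 R)); first by apply: Sg; rewrite oppr_eq0.
    by move=> v hv; rewrite hnu; apply: inPZ.
  rewrite (I5 (- b) (_ : - l != 0)) ?oppr_eq0 //.
  apply: (pres_mul hrep (Sg 0 _)); rewrite ?oppr_eq0 //; first by apply: Sg; rewrite oner_eq0.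
    by apply: pres_a; rewrite oppr_gt0.
  exact: pres_n.
- rewrite (I5 b lnz).
  apply: (pres_mul hrep (Sg 0 lnz)); first by apply: Sg; rewrite oner_eq0.
    exact: pres_a.
  exact: pres_n.
Qed.

Lemma pres_all (g : 'M[C]_2) : SU11 g -> pr (rho g).
Proof.
move=> hg; have [p [q [r [s [hd eg]]]]] := SU11_form hg.
have [r0|rnz] := eqVneq r 0.
  rewrite eg r0 (I8 q (_ : p * s = 1)); last by rewrite -hd r0 mulr0 addr0.
  apply: pres_gl; apply/eqP => p0; move: hd; rewrite r0 p0 mul0r mulr0 addr0 => /eqP.
  by rewrite eq_sym oner_eq0.
rewrite eg (I7 rnz hd).
apply: (pres_mul hrep (Sg _ (oner_neq0 _))); first by apply: SU11_mul; [exact: SU11_w | exact: Sg].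
  exact: pres_n.
apply: (pres_mul hrep (SU11_w R) (Sg _ rnz)); first exact: pres_w.
exact: pres_gl.
Qed.

End Final.

Local Close Scope complex_scope.
Unset Implicit Arguments.

Lemma vec_id (R : realType) (V : lmodType R[i]) (e1 e2 : V) (a b h : R[i]) :
  a *: (e1 + h *: e2) + b *: (e1 - h *: e2) = (a + b) *: e1 + ((a - b) * h) *: e2.
Proof.
by rewrite scalerDr scalerBr !scalerA scalerDl mulrBl scalerBl addrACA.
Qed.

Theorem mainTheorem11 (R : realType) (V : lmodType R[i]) (B : V -> V -> R[i])
    (rho : 'M[R[i]]_2 -> V -> V) :
  hermitian_form B ->
  sig_one_infty_hilbert B ->
  proj_rep B rho ->
  orbitally_continuous B rho ->
  non_elementary B rho ->
  Arg_is B rho (pi / 2) ->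
  preserves_H1_subspace B rho.
Proof.
move=> hB [e0 [h00 hW]] hrep _ _.
have [hneg _] := hW.
move=> [e1 [e2 [mu [K [c [[n1 i1] [[n2 i2] [h12 [hf1 [_ [hf2 [hmu [hT1 [hT2 [hc1 [hc2 [hK0 [hre _]]]]]]]]]]]]]]]]]].
have hmu' : mu * (mu^*)%C = 1 by rewrite -sqr_normc hmu expr1n.
have Sn : SU11 (gmat 1 1 : 'M[R[i]]_2) by apply: SU11_gmat; rewrite oner_eq0.
rewrite (pihalf_02_cos_pihalf R).2 mulr0 in hre.
have Kc : K + (K^*)%C = 0.
  by move: hre; case: (K) => k1 k2 /= ->; simpc.
have E : B (K *: e1 + e2 + c) (K *: e1 + e2 + c) = 0.
  by rewrite -hT2 (BZl hB) (BZr hB) (rhoB hrep Sn) i2 !mulr0.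
have E' : B (K *: e1 + e2 + c) (K *: e1 + e2 + c) = K + (K^*)%C + B c c.
  rewrite !(Bsimp hB) i1 i2 h12 (h21 hB h12) hc1 hc2 (Bsym hB c e1) (Bsym hB c e2) hc1 hc2 rmorph0.
  ring.
rewrite E' Kc add0r in E.
have c0 : c = 0 := null_perp hB h00 hneg i1 i2 h12 hc1 hc2 E.
have hT2' : mu *: rho (gmat 1 1) e2 = K *: e1 + e2 by rewrite hT2 c0 addr0.
have PA := pres_all hB hrep i1 i2 h12 h00 hneg hmu' hK0 hT1 hT2' hf1 hf2.
have c2 : ((2^-1 : R[i])^*)%C = 2^-1.
  by rewrite rmorphV ?rmorph_nat // unitfE pnatr_eq0.
have h21 := h21 hB h12.
exists (e1 + 2^-1 *: e2), (e1 - 2^-1 *: e2).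
split; first by rewrite !(Bsimp hB) i1 i2 h12 h21; rewrite ?rmorphV ?rmorph_nat ?unitfE ?pnatr_eq0 //; field.
split; first by rewrite !(Bsimp hB) i1 i2 h12 h21; rewrite ?rmorphV ?rmorph_nat ?unitfE ?pnatr_eq0 //; field.
split; first by rewrite !(Bsimp hB) i1 i2 h12 h21; rewrite ?rmorphV ?rmorph_nat ?unitfE ?pnatr_eq0 //; field.
move=> g hg w [a [b ->]].
have [x [y ->]] : inP e1 e2 (rho g (a *: (e1 + 2^-1 *: e2) + b *: (e1 - 2^-1 *: e2))).
  apply: (PA g hg); rewrite vec_id; eexists; eexists; reflexivity.
exists (x / 2 + y), (x / 2 - y); rewrite vec_id; congr (_ *: _ + _ *: _); field; done.
Qed.
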